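(* Let $(X_\lambda)_{\lambda\in\Lambda}$ be a family of topological spaces such that $C(X_{\lambda_0})$ has the countable sup property for some $\lambda_0\in\Lambda$ and $X_\lambda$ has calibre $\aleph_1$ for every $\lambda\in\Lambda\setminus\{\lambda_0\}$. Then $C(\prod_{\lambda\in\Lambda}X_\lambda)$ has the countable sup property.
   Context: Products carry the product topology. $C(Z)$ is the vector lattice of real-valued continuous functions on $Z$ with the pointwise order. A vector lattice has the countable sup property if every nonempty subset possessing a supremum contains a countable subset with the same supremum. A space has calibre $\aleph_1$ if every uncountable family of nonempty open subsets contains an uncountable subfamily with nonempty intersection. *)

(* Defs.v *)
From HB Require Import structures.
From mathcomp Require Import all_boot all_order all_algebra.
From mathcomp Require Import all_classical all_reals all_analysis.
Set Implicit Arguments. Unset Strict Implicit. Unset Printing Implicit Defensive.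
Import Order.TTheory GRing.Theory Num.Theory numFieldTopology.Exports numFieldNormedType.Exports.
Local Open Scope classical_set_scope.
Local Open Scope ring_scope.

(* C(Z): real-valued continuous functions on Z, pointwise order.
   [is_sup_C S f] : f is the supremum of S in the vector lattice C(Z). *)
Definition is_sup_C (R : realType) (Z : topologicalType)
    (S : set (Z -> R)) (f : Z -> R) : Prop :=
  continuous f /\
  (forall g, S g -> forall z, g z <= f z) /\
  (forall h : Z -> R, continuous h ->
     (forall g, S g -> forall z, g z <= h z) -> forall z, f z <= h z).

Definition C_countable_sup_property (R : realType) (Z : topologicalType) : Prop :=
  forall (S : set (Z -> R)), S `<=` [set g | continuous g] -> S !=set0 ->
  forall f, is_sup_C S f ->
  exists S' : set (Z -> R), S' `<=` S /\ countable S' /\ is_sup_C S' f.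

Definition calibre_aleph1 (X : topologicalType) : Prop :=
  forall F : set (set X),
    (forall A, F A -> open A /\ A !=set0) -> ~ countable F ->
    exists G : set (set X), G `<=` F /\ ~ countable G /\
      (\bigcap_(A in G) A) !=set0.

(* Main.v *)
Require Import Defs.
From HB Require Import structures.
From mathcomp Require Import all_boot all_order all_algebra.
From mathcomp Require Import all_classical all_reals all_analysis.
From Stdlib Require List.
From mathcomp Require Import lra.
Import numFieldTopology.Exports numFieldNormedType.Exports.
Local Open Scope classical_set_scope.
Set Implicit Arguments. Unset Strict Implicit. Unset Printing Implicit Defensive.
Import Order.TTheory GRing.Theory Num.Theory.
Local Open Scope ring_scope.
Section PartA.
Variable R : realType.

Definition cutr (u : R) : R := Num.min 1 (Num.max 0 u).

Lemma cutr_ge0 u : 0 <= cutr u.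
Proof. rewrite /cutr le_min ler01 /= le_max lexx //. Qed.
Lemma cutr_le1 u : cutr u <= 1.
Proof. by rewrite /cutr ge_min lexx. Qed.
Lemma cutr_le0 u : u <= 0 -> cutr u = 0.
Proof. by move=> h; rewrite /cutr (max_idPl h) (min_idPr ler01). Qed.
Lemma cutr_gt0 u : (0 < cutr u) = (0 < u).
Proof.
rewrite /cutr lt_min ltr01 /= lt_max ltxx /=. done.
Qed.
Lemma cutr_ge1 u : 1 <= u -> cutr u = 1.
Proof.
move=> h; rewrite /cutr (max_idPr (le_trans ler01 h)); exact: (min_idPl h).
Qed.

Lemma cutr_comp_continuous (Z : topologicalType) (phi : Z -> R) :
  continuous phi -> continuous (fun z => cutr (phi z)).
Proof.
move=> cphi.
have -> : (fun z => cutr (phi z)) = ((fun _ => 1) \min ((fun _ => 0) \max phi)).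
  by apply: funext => z.
apply: min_fun_continuous; first exact: cst_continuous.
apply: max_fun_continuous => //; exact: cst_continuous.
Qed.

Variable Z : topologicalType.

Definition crit (S : set (Z -> R)) (f : Z -> R) : Prop :=
  forall phi : Z -> R, continuous phi -> forall z0, 0 < phi z0 ->
  forall e : R, 0 < e -> exists g, S g /\ exists z, 0 < phi z /\ f z - e < g z.

Lemma sup_crit1 S f : is_sup_C S f -> crit S f.
Proof.
move=> [cf [ub lst]] phi cphi z0 phiz0 e e0.
apply: contrapT => H.
have H' : forall g, S g -> forall z, 0 < phi z -> g z <= f z - e.
  move=> g Sg z pz; rewrite leNgt; apply/negP => lt.
  by apply: H; exists g; split => //; exists z.
pose h := fun z => f z - e * cutr (phi z).
have ch : continuous h.
  have -> : h = f - ((fun _ => e) \* (fun z => cutr (phi z))) by [].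
  move=> z; apply: continuousB; first exact: cf.
  apply: continuousM; first exact: cst_continuous.
  exact: cutr_comp_continuous.
have := lst h ch.
have hb : forall g, S g -> forall z, g z <= h z.
  move=> g Sg z; rewrite /h; have [pz|pz] := ltP 0 (phi z).
    apply: (le_trans (H' g Sg z pz)); rewrite lerD2l lerN2.
    rewrite -[leRHS](mulr1 e); apply: ler_wpM2l; [exact: ltW | exact: cutr_le1].
  by rewrite cutr_le0 // mulr0 subr0; exact: ub.
move=> /(_ hb z0); rewrite /h => H2.
have : 0 < e * cutr (phi z0) by apply: mulr_gt0 => //; rewrite cutr_gt0.
move: H2; set a := e * cutr _; lra.
Qed.

Lemma sup_crit2 S f : continuous f -> (forall g, S g -> forall z, g z <= f z) ->
  crit S f -> is_sup_C S f.
Proof.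
move=> cf ub cr; split => //; split => // h ch hb z.
rewrite leNgt; apply/negP => hz.
pose e := (f z - h z) / 2.
have e0 : 0 < e by rewrite /e divr_gt0 // subr_gt0.
pose phi := fun w => f w - h w - e.
have cphi : continuous phi.
  have -> : phi = (f - h) - (fun _ => e) by [].
  move=> w; apply: continuousB; last exact: cst_continuous.
  exact: continuousB (cf w) (ch w).
have pz : 0 < phi z.
  rewrite /phi /e; move: hz; set a := f z; set b := h z; lra.
have [g [Sg [w [pw lt]]]] := cr phi cphi z pz e e0.
have := hb g Sg w; move: pw lt; rewrite /phi.
set a := f w; set b := h w; set c := g w; lra.
Qed.

End PartA.

Section Count.
Lemma cnt_sub T (A B : set T) : A `<=` B -> countable B -> countable A.
Proof. by move=> AB; apply: sub_countable; exact: subset_card_le. Qed.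

Lemma cnt_img T U (f : T -> U) (A : set T) : countable A -> countable (f @` A).
Proof. by apply: sub_countable; exact: card_image_le. Qed.

Lemma cnt_inj T U (A : set T) (B : set U) (P : T -> U -> Prop) :
  countable B -> (forall a, A a -> exists b, B b /\ P a b) ->
  (forall a a' b, A a -> A a' -> B b -> P a b -> P a' b -> a = a') ->
  countable A.
Proof.
move=> cB ex un.
have sub : A `<=` \bigcup_(b in B) [set a | A a /\ P a b].
  by move=> a Aa; have [b [Bb Pab]] := ex a Aa; exists b.
apply: (cnt_sub sub); apply: bigcup_countable => // b Bb.
have [[a0 [Aa0 P0]]|nex] := pselect (exists a, A a /\ P a b).
  apply: (@cnt_sub _ _ [set a0]); last exact: countable1.
  by move=> a [Aa Pa]; exact: (un a a0 b).
apply: (@cnt_sub _ _ set0) => // a [Aa Pa]; apply: nex; by exists a.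
Qed.

Lemma cnt_nat T (F : nat -> set T) : (forall n, countable (F n)) ->
  countable (\bigcup_n F n).
Proof. by move=> h; apply: bigcup_countable => // n _; exact: h. Qed.

Lemma uncnt_piece T (A : set T) (F : nat -> set T) : ~ countable A ->
  A `<=` \bigcup_n F n -> exists n, ~ countable (A `&` F n).
Proof.
move=> nA sub; apply: contrapT => H; apply: nA.
apply: (@cnt_sub _ _ (\bigcup_n (A `&` F n))).
  by move=> a Aa; have [n _ Fn] := sub a Aa; exists n.
apply: cnt_nat => n; apply: contrapT => h; apply: H; by exists n.
Qed.

Lemma cnt_U T (A B : set T) : countable A -> countable B -> countable (A `|` B).
Proof.
move=> cA cB.
apply: (@cnt_sub _ _ (\bigcup_(b in [set: bool]) (if b then A else B))).
  by move=> x [Ax|Bx]; [exists true | exists false].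
by apply: bigcup_countable => // -[].
Qed.

Lemma maximal_family T (A : set T) (P : T -> T -> Prop) :
  (forall a b, P a b -> P b a) ->
  exists M, M `<=` A /\ (forall a b, M a -> M b -> a <> b -> P a b) /\
    (forall a, A a -> ~ M a -> exists b, M b /\ ~ P a b).
Proof.
move=> Psym.
pose G := fun M : set T => M `<=` A /\ (forall a b, M a -> M b -> a <> b -> P a b).
have [M [[MA MP] Mmax]] : exists M, G M /\ forall B, M `<` B -> ~ G B.
  apply: Zorn_bigcup => Fm FG tot; split.
    by move=> x [Y FY Yx]; exact: (FG Y FY).1.
  move=> a b [Y FY Ya] [Y' FY' Yb] ab.
  have [YY'|Y'Y] := tot Y Y' FY FY'.
    exact: (FG Y' FY').2 (YY' _ Ya) Yb ab.
  exact: (FG Y FY).2 Ya (Y'Y _ Yb) ab.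
exists M; split => //; split => // a Aa nMa.
apply: contrapT => H.
have allP : forall b, M b -> P a b.
  move=> b Mb; apply: contrapT => nP; apply: H; by exists b.
apply: (Mmax (M `|` [set a])); last split.
- split; first by move=> x Mx; left.
  by move=> BM; apply: nMa; apply: BM; right.
- by move=> x [Mx|->] //; exact: MA.
- move=> x y [Mx|->] [My|->] xy //.
  + exact: MP.
  + by apply: Psym; exact: allP.
  + exact: allP.
Qed.
End Count.

Section PartC.
Variable R : realType.

Definition coz (Z : topologicalType) (W : set Z) :=
  exists phi : Z -> R, continuous phi /\ W = [set z | 0 < phi z].

Definition cccZ (Z : topologicalType) := forall F : set (set Z),
  (forall D, F D -> coz D /\ D !=set0) ->
  (forall D D' z, F D -> F D' -> D z -> D' z -> D = D') -> countable F.

Lemma big_k (x : R) : 0 < x -> exists k : nat, 1 <= k%:R * x.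
Proof.
move=> x0; exists (Num.trunc (1 / x)).+1.
have := truncnS_gt (1 / x); rewrite ltr_pdivrMr // => h; exact: ltW.
Qed.

Lemma small_e (e : R) : 0 < e -> exists n : nat, 1 / n.+1%:R <= e.
Proof.
move=> e0; exists (Num.trunc (1 / e)).
have := truncnS_gt (1 / e); rewrite ltr_pdivrMr // => h.
rewrite ler_pdivrMr ?ltr0Sn //; rewrite mulrC; exact: ltW.
Qed.

Lemma cutr_kphi_pos (k : nat) (y : R) : 0 < cutr (k%:R * y) -> 0 < y.
Proof.
rewrite cutr_gt0 => h; rewrite ltNge; apply/negP => h2.
have := mulr_ge0_le0 (ler0n R k) h2; rewrite leNgt h //.
Qed.

Lemma cont_kphi (Z : topologicalType) (k : nat) (phi : Z -> R) :
  continuous phi -> continuous (fun z => cutr (k%:R * phi z)).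
Proof.
move=> cphi; apply: (cutr_comp_continuous (phi := (fun _ => k%:R) \* phi)).
move=> z; apply: continuousM; [exact: cst_continuous | exact: cphi].
Qed.

Variable Z : topologicalType.

Lemma csp_ccc : C_countable_sup_property R Z -> cccZ Z.
Proof.
move=> csp F HF Hdisj.
pose Q (phi : Z -> R) := continuous phi /\
  ((exists D, F D /\ forall z, 0 < phi z -> D z) \/
   (forall D z, F D -> 0 < phi z -> ~ D z)).
pose S := [set g : Z -> R | exists phi (k : nat), Q phi /\
   g = fun z => cutr (k%:R * phi z)].
have Sc : S `<=` [set g | continuous g].
  by move=> g [phi [k [[cphi _] ->]]]; exact: cont_kphi.
have S0 : S !=set0.
  exists (fun z => cutr (0%:R * (-1 : R))); exists (fun _ => -1), 0%N; split => //.
  split; first exact: cst_continuous.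
  by right => D z _; rewrite ltr0N1.
have sup1 : is_sup_C S (fun _ => 1 : R).
  apply: sup_crit2; first exact: cst_continuous.
    by move=> g [phi [k [_ ->]]] z; exact: cutr_le1.
  move=> psi cpsi z0 pz0 e e0.
  have [[D [z1 [FD [p1 D1]]]]|nex] := pselect (exists D z, F D /\ 0 < psi z /\ D z).
    have [[chi [cchi Deq]] _] := HF D FD.
    have c1 : 0 < chi z1 by move: D1; rewrite Deq.
    pose phi := psi \min chi.
    have q1 : 0 < phi z1 by rewrite /phi /= lt_min p1 c1.
    have [k hk] := big_k q1.
    exists (fun z => cutr (k%:R * phi z)); split.
      exists phi, k; split => //; split; first exact: min_fun_continuous.
      left; exists D; split => // z; rewrite /phi /= lt_min => /andP[_ h].
      by rewrite Deq.
    exists z1; split => //; rewrite cutr_ge1 //; lra.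
  have [k hk] := big_k pz0.
  exists (fun z => cutr (k%:R * psi z)); split.
    exists psi, k; split => //; split => //; right => D z FD pz Dz.
    by apply: nex; exists D, z.
  exists z0; split => //; rewrite cutr_ge1 //; lra.
have [S' [S'S [cS' supS']]] := csp S Sc S0 _ sup1.
have cr := sup_crit1 supS'.
apply: (@cnt_inj _ _ F S' (fun D g => exists z, D z /\ 0 < g z)) => //.
  move=> D FD; have [[chi [cchi Deq]] [z0 Dz0]] := HF D FD.
  have pz0 : 0 < chi z0 by move: Dz0; rewrite Deq.
  have [g [S'g [z [pz lt]]]] := cr chi cchi z0 pz0 1 ltr01.
  exists g; split => //; exists z; split; first by rewrite Deq.
  by move: lt; rewrite subrr.
move=> D D' g FD FD' S'g [z [Dz gz]] [z' [Dz' gz']].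
have [phi [k [[_ Qb] geq]]] := S'S g S'g.
rewrite geq in gz gz'.
have pz := cutr_kphi_pos gz; have pz' := cutr_kphi_pos gz'.
case: Qb => [[D0 [FD0 sub]]|nd].
  have e1 := Hdisj D D0 z FD FD0 Dz (sub z pz).
  have e2 := Hdisj D' D0 z' FD' FD0 Dz' (sub z' pz').
  by rewrite e1 e2.
by exfalso; exact: nd D z FD pz Dz.
Qed.


Lemma ccc_csp : cccZ Z -> C_countable_sup_property R Z.
Proof.
move=> ccc S Sc S0 f supf.
have cf := supf.1; have ub := supf.2.1.
have cr := sup_crit1 supf.
pose en (n : nat) : R := 1 / n.+1%:R.
have en0 n : 0 < en n by rewrite /en divr_gt0 // ltr0Sn.
pose good n (W : set Z) (g : Z -> R) := S g /\ forall z, W z -> f z - en n < g z.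
pose Fam n := [set W : set Z | coz W /\ W !=set0 /\ exists g, good n W g].
pose disj := fun W W' : set Z => forall z, W z -> W' z -> False.
have dsym : forall a b, disj a b -> disj b a by move=> a b h z x y; exact: h z y x.
have /choice [M HM] : forall n, exists M, M `<=` Fam n /\
    (forall a b, M a -> M b -> a <> b -> disj a b) /\
    (forall a, Fam n a -> ~ M a -> exists b, M b /\ ~ disj a b).
  by move=> n; exact: maximal_family.
pose pick n W : Z -> R := match pselect (exists g, good n W g) with
  | left h => proj1_sig (cid h) | right _ => f end.
have pickP n W : Fam n W -> good n W (pick n W).
  move=> [_ [_ ex]]; rewrite /pick; case: pselect => // h.
  exact: (proj2_sig (cid h)).
pose S' := \bigcup_n (pick n @` M n).
have S'S : S' `<=` S.
  by move=> g [n _ [W MW <-]]; exact: (pickP n W ((HM n).1 W MW)).1.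
exists S'; split => //; split.
  apply: cnt_nat => n; apply: cnt_img; apply: ccc.
    by move=> D MD; have [cD [nD _]] := (HM n).1 D MD.
  move=> D D' z MD MD' Dz D'z; apply: contrapT => neq.
  exact: (HM n).2.1 D D' MD MD' neq z Dz D'z.
apply: sup_crit2 => //.
  by move=> g /S'S Sg; exact: ub.
move=> phi cphi z0 pz0 e e0.
have [n hn] := small_e e0.
have [g [Sg [z1 [p1 lt1]]]] := cr phi cphi z0 pz0 (en n) (en0 n).
pose W := [set z | 0 < Num.min (phi z) (g z - f z + en n)].
have FW : Fam n W.
  split.
    exists (phi \min (g - f + (fun _ => en n))); split => //.
    apply: min_fun_continuous => // z; apply: continuousD.
      exact: continuousB (Sc g Sg z) (cf z).
    exact: cst_continuous.
  split; first by exists z1; rewrite /W /= lt_min p1 /=; lra.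
  exists g; split => // z; rewrite /W /= lt_min => /andP[_ h]; lra.
have [W' [MW' [z [Wz W'z]]]] : exists W', M n W' /\ exists z, W z /\ W' z.
  have [MW|nMW] := pselect (M n W).
    by exists W; split => //; exists z1; rewrite /W /= lt_min p1 /=; lra.
  have [b [Mb nd]] := (HM n).2.2 W FW nMW.
  exists b; split => //; apply: contrapT => nex; apply: nd => z Wz bz.
  by apply: nex; exists z.
have [_ gp] := pickP n W' ((HM n).1 W' MW').
exists (pick n W'); split; first by exists n => //; exists W'.
exists z; split; first by move: Wz; rewrite /W /= lt_min => /andP[].
move: (gp z W'z) hn; rewrite /en; set q := (1 / _); set u := pick n W' z; lra.
Qed.

End PartC.
Section Prod.
Variables (Lambda : Type) (X : Lambda -> topologicalType).
Local Notation P := (prod_topology X).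

Definition box (cs : seq {i : Lambda & set (X i)}) : set P :=
  [set z | forall c, List.In c cs -> projT2 c (z (projT1 c))].

Definition goodcs (p : P) (cs : seq {i : Lambda & set (X i)}) :=
  (forall c, List.In c cs -> open (projT2 c)) /\ box cs p.

Lemma box_app cs1 cs2 : box (cs1 ++ cs2) = box cs1 `&` box cs2.
Proof.
apply/seteqP; split => z.
  by move=> h; split => c hc; apply: h; apply: List.in_or_app; [left|right].
by move=> [h1 h2] c hc; case: (List.in_app_or _ _ _ hc) => hc'; [exact: h1|exact: h2].
Qed.

Lemma box_nbhs (p : P) (D : set P) : nbhs p D ->
  exists cs, goodcs p cs /\ box cs `<=` D.
Proof.
pose B := filter_from (goodcs p) box.
have FB : Filter B.
  apply: filter_from_filter.
    by exists [::]; split => // c [].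
  move=> cs1 cs2 [ o1 b1 ] [ o2 b2 ]; exists (cat cs1 cs2).
    split; last by rewrite box_app.
    by move=> c hc; case: (List.in_app_or _ _ _ hc) => hc'; [exact: o1|exact: o2].
  by rewrite box_app.
have : B --> p.
  apply/cvg_sup => i U [V] [[W] oW <-] WfN WU.
  exists [:: existT _ i W]; last first.
    by move=> z /(_ (existT _ i W) (or_introl erefl)) /= h; apply: WU.
  split; first by move=> c [ <- | [] ].
  by move=> c [ <- | [] ].
by move=> /(_ D) h /h [cs gcs sub]; exists cs.
Qed.

Lemma box_open cs : (forall c, List.In c cs -> open (projT2 c)) -> open (box cs).
Proof.
elim: cs => [_|c cs IH oc].
  by rewrite (_ : box [::] = setT); [exact: openT | apply/seteqP; split => // z _ c []].
have -> : box (c :: cs) = (fun z : P => z (projT1 c)) @^-1` projT2 c `&` box cs.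
  apply/seteqP; split => z.
    by move=> h; split; [apply: h; left | move=> c' hc'; apply: h; right].
  by move=> [h1 h2] c' [<-|hc'] //; exact: h2.
apply: openI; last by apply: IH => c' hc'; apply: oc; right.
apply: open_comp; last by apply: oc; left.
move=> z _; exact: (@proj_continuous {classic Lambda} X (projT1 c)).
Qed.

Definition upd (y : P) (l : Lambda) (x : X l) : P := @dfwith {classic Lambda} X y l x.
Arguments upd : clear implicits.

Lemma upd_continuous (y : P) l : continuous (upd y l).
Proof. exact: (@dfwith_continuous {classic Lambda} X y l). Qed.

Lemma upd_same (y y' : P) l x j : l = j -> upd y l x j = upd y' l x j.
Proof. by move=> e; subst j; rewrite /upd !dfwithin. Qed.

Lemma upd_at (y g : P) l j : l = j -> upd y l (g l) j = g j.
Proof. by move=> e; subst j; rewrite /upd dfwithin. Qed.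

Lemma upd_ne (y : P) l x j : l <> j -> upd y l x j = y j.
Proof. by move=> ne; rewrite /upd dfwithout //; apply/eqP. Qed.

Lemma upd_id (y : P) l : upd y l (y l) = y.
Proof.
apply: functional_extensionality_dep => j.
have [e|ne] := pselect (l = j); first exact: upd_at.
exact: upd_ne.
Qed.

End Prod.
Arguments upd {Lambda X} y l x _.

Lemma uncnt_nonempty T (A : set T) : ~ countable A -> exists a, A a.
Proof.
move=> nA; apply: contrapT => h; apply: nA; apply: (@cnt_sub _ _ set0) => // a Aa.
by apply: h; exists a.
Qed.

Lemma calibre_idx (Y : topologicalType) (T : Type) (A : set T) (W : T -> set Y) :
  calibre_aleph1 Y -> ~ countable A -> (forall a, A a -> open (W a) /\ W a !=set0) ->
  exists x, exists A2, A2 `<=` A /\ ~ countable A2 /\ forall a, A2 a -> W a x.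
Proof.
move=> cal nA HW.
have [cF|nF] := pselect (countable (W @` A)).
  have [U [FU nU]] : exists U, (W @` A) U /\ ~ countable [set a | A a /\ W a = U].
    apply: contrapT => h; apply: nA.
    apply: (@cnt_sub _ _ (\bigcup_(U in W @` A) [set a | A a /\ W a = U])).
      by move=> a Aa; exists (W a) => //; exists a.
    apply: bigcup_countable => // U FU; apply: contrapT => nc; apply: h.
    by exists U.
  have [a Aa WaU] := FU.
  have [x Wx] := (HW a Aa).2.
  exists x, [set a | A a /\ W a = U]; split; first by move=> b [].
  split => // b [_ ->]; by rewrite -WaU.
have hop : forall U, (W @` A) U -> open U /\ U !=set0.
  by move=> U [a Aa <-]; exact: HW.
have [G [GF [nG [x Gx]]]] := cal (W @` A) hop nF.
exists x, [set a | A a /\ G (W a)]; split; first by move=> b [].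
split.
  move=> cA; apply: nG; apply: (@cnt_sub _ _ (W @` [set a | A a /\ G (W a)])).
    move=> U GU; have [a Aa WaU] := GF U GU; exists a => //; split => //.
    by rewrite WaU.
  exact: cnt_img.
move=> a [_ GWa]; exact: Gx.
Qed.

Lemma In_filter T (q : pred T) c s : List.In c (seq.filter q s) <-> List.In c s /\ q c.
Proof.
elim: s => [|x s IH] /=; first by split => // -[].
case qx: (q x) => /=.
  split; first by move=> [<-|/IH [h1 h2]]; [split => //; left | split => //; right].
  by move=> [[<-|h] qc]; [left | right; apply/IH].
split; first by move=> /IH [h1 h2]; split => //; right.
by move=> [[<-|h] qc]; [rewrite qx in qc | apply/IH].
Qed.

Lemma size_filter_lt T (q : pred T) c s : List.In c s -> ~~ q c ->
  (size (seq.filter q s) < size s)%N.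
Proof.
elim: s => [|x s IH] //= [<-|h] nq.
  by rewrite (negbTE nq) /= ltnS size_filter count_size.
case: (q x) => /=; first by rewrite ltnS IH.
exact: leq_trans (IH h nq) _.
Qed.

Lemma cnt_list T (s : seq T) : countable [set c | List.In c s].
Proof.
elim: s => [|x s IH]; first by apply: (@cnt_sub _ _ set0) => // c [].
apply: (@cnt_sub _ _ ([set x] `|` [set c | List.In c s])).
  by move=> c [<-|h]; [left|right].
apply: cnt_U => //; exact: countable1.
Qed.

Section Claim.
Variables (Lambda : Type) (X : Lambda -> topologicalType) (l0 : Lambda).
Hypothesis hcal : forall l, l <> l0 -> calibre_aleph1 (X l).
Local Notation P := (prod_topology X).
Local Notation cst := {i : Lambda & set (X i)}.

Lemma goodcs_sub (p : P) (cs cs' : seq cst) :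
  (forall c, List.In c cs' -> List.In c cs) -> goodcs p cs -> goodcs p cs'.
Proof. by move=> sub [ ho hb ]; split => c /sub h; [exact: ho | exact: hb]. Qed.
Lemma claim_n (T : Type) (p : T -> P) n : forall (A : set T) (cs : T -> seq cst),
  ~ countable A -> (forall a, A a -> goodcs (p a) (cs a) /\ (size (cs a) <= n)%N) ->
  exists y : P, exists A', A' `<=` A /\ ~ countable A' /\
    forall a, A' a -> forall c, List.In c (cs a) -> projT1 c <> l0 ->
      projT2 c (y (projT1 c)).
Proof.
elim: n => [|n IH] A cs nA H.
  have [a0 Aa0] := uncnt_nonempty nA.
  exists (p a0), A; split => //; split => // a Aa c hc.
  have := (H a Aa).2; rewrite leqn0 => /nilP e; by rewrite e in hc.
pose A1 l := [set a | A a /\ exists c, List.In c (cs a) /\ projT1 c = l].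
have [[l [nl nA1]]|nex] := pselect (exists l, l <> l0 /\ ~ countable (A1 l)).
  pose ql := fun c : cst => `[< projT1 c = l >].
  pose W a := [set x : X l | box (seq.filter ql (cs a)) (upd (p a) l x)].
  have HW : forall a, A1 l a -> open (W a) /\ W a !=set0.
    move=> a [Aa _]; have [[ ho hb ] _] := H a Aa; split.
      apply: open_comp; first by move=> x _; exact: upd_continuous.
      by apply: box_open => c /In_filter [hc _]; exact: ho.
    exists (p a l); rewrite /W /= upd_id => c /In_filter [hc _]; exact: hb.
  have [x [A2 [A2A1 [nA2 Wx]]]] := calibre_idx (hcal nl) nA1 HW.
  pose cs' a := seq.filter (predC ql) (cs a).
  have H2 : forall a, A2 a -> goodcs (p a) (cs' a) /\ (size (cs' a) <= n)%N.
    move=> a A2a; have [Aa [c [hc e]]] := A2A1 a A2a; have [g sz] := H a Aa.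
    split; first by apply: goodcs_sub g => c' /In_filter [].
    rewrite -ltnS; apply: leq_trans sz; apply: (size_filter_lt (c := c)) => //=.
    by rewrite /ql negbK; apply/asboolP.
  have [y [A3 [A3A2 [nA3 Hy]]]] := IH A2 cs' nA2 H2.
  exists (upd y l x), A3; split; first by move=> a /A3A2 /A2A1 [].
  split => // a A3a c hc nc.
  have [e|ne] := pselect (l = projT1 c).
    have := Wx a (A3A2 a A3a) c; rewrite In_filter => /(_ (conj hc _)).
    rewrite (upd_same _ y) //; apply; rewrite /ql; exact/asboolP.
  rewrite upd_ne //; apply: (Hy a) => //; rewrite /cs'; apply/In_filter; split => //=.
  by rewrite /ql; apply/negP => /asboolP e; apply: ne.
have cA1 : forall l, l <> l0 -> countable (A1 l).
  by move=> l nl; apply: contrapT => h; apply: nex; exists l.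
pose Pd a b := forall c c', List.In c (cs a) -> List.In c' (cs b) ->
  projT1 c <> l0 -> projT1 c = projT1 c' -> False.
have Psym : forall a b, Pd a b -> Pd b a.
  move=> a b h c c' hc hc' n0 e; apply: (h c' c hc' hc) => //.
  by rewrite -e.
have [M [MA [MP Mmax]]] := maximal_family A Psym.
have [a0 Aa0] := uncnt_nonempty nA.
have nM : ~ countable M.
  move=> cM.
  pose Cs := \bigcup_(b in M) [set projT1 c | c in [set c | List.In c (cs b)]].
  have cCs : countable Cs.
    apply: bigcup_countable => // b _; apply: cnt_img; exact: cnt_list.
  pose Bs := \bigcup_(l in Cs `&` [set l | l <> l0]) A1 l.
  have cBs : countable Bs.
    apply: bigcup_countable; first by apply: cnt_sub cCs => l [].
    by move=> l [_ nl]; exact: cA1.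
  have [a [Aa nBM]] : exists a, A a /\ ~ (Bs a \/ M a).
    apply: contrapT => h; apply: nA; apply: (@cnt_sub _ _ (Bs `|` M)).
      move=> a Aa; apply: contrapT => nb; apply: h; by exists a.
    exact: cnt_U.
  have [b [Mb nP]] := Mmax a Aa (fun Ma => nBM (or_intror Ma)).
  apply: nP => c c' hc hc' n0 e; apply: nBM; left.
  exists (projT1 c); last by split => //; exists c.
  split => //; exists b => //; exists c' => //.
pose y : P := fun l => match pselect (exists a, M a /\ exists c,
    List.In c (cs a) /\ projT1 c = l /\ l <> l0) with
  | left h => p (proj1_sig (cid h)) l | right _ => p a0 l end.
exists y, M; split => //; split => // a Ma c hc nc.
rewrite /y; case: pselect => [h|nh]; last first.
  by exfalso; apply: nh; exists a; split => //; exists c.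
case: (cid h) => a' /= [Ma' [c' [hc' [e ne]]]].
have [<-|neq] := pselect (a = a').
  have [[_ b] _] := H a (MA a Ma); exact: b.
by exfalso; apply: (MP a a' Ma Ma' neq c c' hc hc' nc (esym e)).
Qed.


Lemma claim (T : Type) (p : T -> P) (A : set T) (cs : T -> seq cst) :
  ~ countable A -> (forall a, A a -> goodcs (p a) (cs a)) ->
  exists y : P, exists A', A' `<=` A /\ ~ countable A' /\
    forall a, A' a -> forall c, List.In c (cs a) -> projT1 c <> l0 ->
      projT2 c (y (projT1 c)).
Proof.
move=> nA H.
have [n nn] := @uncnt_piece _ A (fun n => [set a | (size (cs a) <= n)%N]) nA
  (fun a _ => ex_intro2 _ _ (size (cs a)) I (leqnn _)).
have [y [A' [A'A [nA' Hy]]]] := @claim_n T p n (A `&` [set a | (size (cs a) <= n)%N]) cs nn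
  (fun a '(conj Aa sz) => conj (H a Aa) sz).
by exists y, A'; split => //; move=> a /A'A [].
Qed.

Variable R : realType.

Lemma coz_open (Z : topologicalType) (D : set Z) : coz R D -> open D.
Proof.
move=> [phi [cphi ->]].
have -> : [set z | 0 < phi z] = phi @^-1` `]0, +oo[%classic.
  by apply/seteqP; split => z /=; rewrite in_itv /= andbT.
apply: open_comp; last exact: rray_open.
by move=> z _; exact: cphi.
Qed.

Lemma prod_ccc : cccZ R (X l0) -> cccZ R P.
Proof.
move=> ccc0 F HF Hdisj; apply: contrapT => nF.
have [D0 FD0] := uncnt_nonempty nF; have [_ [z0 _]] := HF D0 FD0.
have /choice [pc Hpc] : forall D : set P, exists pc : P * seq cst,
    F D -> D pc.1 /\ goodcs pc.1 pc.2 /\ box pc.2 `<=` D.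
  move=> D; have [FD|nFD] := pselect (F D); last by exists (z0, [::]).
  have [cD [p Dp]] := HF D FD.
  have nD : nbhs p D by apply: open_nbhs_nbhs; split => //; exact: coz_open cD.
  have [cs [g sub]] := box_nbhs nD.
  by exists (p, cs).
have [y [A' [A'F [nA' Hy]]]] := @claim (set P) (fun D => (pc D).1) F
  (fun D => (pc D).2) nF (fun D FD => (Hpc D FD).2.1).
pose sec D := [set x : X l0 | D (upd y l0 x)].
have secne : forall D, A' D -> sec D ((pc D).1 l0).
  move=> D A'D; have [_ [[_ hb] sub]] := Hpc D (A'F D A'D).
  apply: sub => c hc; have [e|ne] := pselect (l0 = projT1 c).
    by rewrite upd_at //; exact: hb.
  rewrite upd_ne //; apply: (Hy D) => //; by move=> e; apply: ne.
apply: nA'.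
apply: (@cnt_inj _ _ A' (sec @` A') (fun D S => S = sec D)).
- apply: ccc0.
    move=> S [D A'D <-]; split; last by exists ((pc D).1 l0); exact: secne.
    have [[phi [cphi Deq]] _] := HF D (A'F D A'D).
    exists (fun x => phi (upd y l0 x)); split.
      by move=> x; apply: continuous_comp; [exact: upd_continuous | exact: cphi].
    by rewrite /sec Deq.
  move=> S S' x [D A'D <-] [D' A'D' <-] h1 h2.
  by rewrite (Hdisj D D' _ (A'F D A'D) (A'F D' A'D') h1 h2).
- by move=> D A'D; exists (sec D); split => //; exists D.
- move=> D D' S A'D A'D' _ e1 e2.
  have h1 := secne D A'D.
  have h2 : sec D' ((pc D).1 l0) by rewrite -e2 e1.
  exact: (Hdisj D D' _ (A'F D A'D) (A'F D' A'D') h1 h2).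
Qed.

End Claim.

Theorem corollary6p5 (R : realType) (Lambda : Type)
    (X : Lambda -> topologicalType) (l0 : Lambda) :
  C_countable_sup_property R (X l0) ->
  (forall l, l <> l0 -> calibre_aleph1 (X l)) ->
  C_countable_sup_property R (prod_topology X).
Proof.
move=> csp0 hcal; apply: ccc_csp; apply: (prod_ccc hcal).
exact: csp_ccc.
Qed.
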